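(* Let $G$ be a finite simple $2$-connected graph and let $L$ be the maximum length of a cycle in $G$. Then $$1+\lceil\log_2 L\rceil\le {\rm td}(G)\le \binom{L-1}{2}+2.$$
   Context: The height of a rooted forest is the maximum number of vertices on a path from a root to a leaf. The closure of a rooted forest $F$ is the graph on $V(F)$ in which $xy$ is an edge iff $x$ is an ancestor of $y$ or $y$ is an ancestor of $x$. The tree-depth ${\rm td}(G)$ of a graph $G$ is the minimum height of a rooted forest $F$ such that $G$ is a subgraph of the closure of $F$. *)

(* Defs.v *)
From mathcomp Require Import all_boot.
Set Implicit Arguments. Unset Strict Implicit. Unset Printing Implicit Defensive.

Section Graphs.
Variable T : finType.

Definition simple_graph (e : rel T) : Prop := symmetric e /\ irreflexive e.

Definition del_vertex (e : rel T) (v : T) : rel T :=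
  [rel x y | [&& e x y, x != v & y != v]].

Definition connected_graph (e : rel T) : Prop := forall x y : T, connect e x y.

Definition two_connected (e : rel T) : Prop :=
  [/\ 2 < #|T|, connected_graph e &
      forall v x y : T, x != v -> y != v -> connect (del_vertex e v) x y].

Definition is_cycle_of_length (e : rel T) (s : seq T) (n : nat) : Prop :=
  [/\ uniq s, size s = n, 3 <= n & cycle e s].

Definition max_cycle_length (e : rel T) (L : nat) : Prop :=
  (exists s, is_cycle_of_length e s L) /\
  (forall s n, is_cycle_of_length e s n -> n <= L).

(* Rooted forests on T, given by a parent function (None = root). *)
Definition forest (p : {ffun T -> option T}) : bool :=
  [forall y, iter #|T| (obind p) (Some y) == None].

Definition anc (p : {ffun T -> option T}) (x y : T) : bool :=
  [exists k : 'I_#|T|.+1, (0 < k) && (iter k (obind p) (Some y) == Some x)].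

Definition fdepth (p : {ffun T -> option T}) (y : T) : nat :=
  #|[set x | anc p x y]|.+1.

Definition fheight (p : {ffun T -> option T}) : nat := \max_(y : T) fdepth p y.

Definition in_closure (e : rel T) (p : {ffun T -> option T}) : bool :=
  [forall x, forall y, e x y ==> (anc p x y || anc p y x)].

(* tree-depth: minimum height of a rooted forest whose closure contains G.
   (The default #|T| is never smaller than the min, since a path forest
   of height #|T| always exists.) *)
Definition td (e : rel T) : nat :=
  \big[minn/#|T|]_(p : {ffun T -> option T} | forest p && in_closure e p)
     fheight p.

End Graphs.

(* Main.v *)
Require Import Defs.
From mathcomp Require Import all_boot zify.
Set Implicit Arguments. Unset Strict Implicit. Unset Printing Implicit Defensive.

Module A1.

Section Chain.
Variable T : finType.
Variable p : {ffun T -> option T}.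

Definition up k (y : T) := iter k (obind p) (Some y).
Definition par (x : T) := odflt x (p x).
Definition dep (y : T) := #|[set x | anc p x y]|.

Lemma upS k y : up k.+1 y = obind p (up k y). Proof. by []. Qed.

Lemma up_None k j y : up k y = None -> up (j + k) y = None.
Proof. by move=> H; elim: j => [|j IH] //=; rewrite /up /= -/(up _ _) ?IH // ; rewrite /up in IH *; rewrite IH. Qed.

Lemma up_None_le k j y : k <= j -> up k y = None -> up j y = None.
Proof. by move=> kj H; rewrite -(subnK kj); apply: up_None. Qed.

Lemma upD i k y : up (i + k) y = iter i (obind p) (up k y).
Proof. by rewrite /up iterD. Qed.

Definition cspec y n := (forall k, k <= n -> up k y = Some (iter k par y)) /\ p (iter n par y) = None.

Lemma cspec_up y n : cspec y n -> forall k, n < k -> up k y = None.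
Proof.
case=> H1 H2 k nk; apply: (@up_None_le n.+1) => //.
by rewrite upS (H1 n (leqnn n)) /= H2.
Qed.

Lemma cspec_ex y k : up k y = None -> exists n, cspec y n.
Proof.
move=> Hk.
have ex : exists n, up n.+1 y == None.
  case: k Hk => [//|k] Hk; by exists k; apply/eqP.
pose n := ex_minn ex.
have [Hn Hmin] : up n.+1 y = None /\ forall j, j < n -> up j.+1 y <> None.
  rewrite /n; case: ex_minnP => m /eqP Hm Hmm; split=> // j jm /eqP Hj.
  by have := Hmm _ Hj; rewrite leqNgt jm.
have H1 : forall j, j <= n -> up j y = Some (iter j par y).
  elim=> [|j IH] jn //.
  have := Hmin j jn; rewrite upS (IH (ltnW jn)) /= /par.
  by case: (p _) => //= z _; rewrite iterS /par.
exists n; split=> //.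
by have := Hn; rewrite upS H1.
Qed.

Lemma cspec_inj y n i j : cspec y n -> i <= n -> j <= n -> iter i par y = iter j par y -> i = j.
Proof.
move=> [H1 H2].
wlog ij : i j / i <= j.
  move=> W ni nj E; case: (leqP i j) => h; first exact: W.
  by apply/esym/(W j i) => //; exact: ltnW.
move=> ni jn E; case: (ltngtP i j) ij => // lij _; exfalso.
have per : forall k, i <= k -> exists2 k', i <= k' < j & iter k par y = iter k' par y.
  elim/ltn_ind=> k IH ik.
  case: (ltnP k j) => kj; first by exists k; rewrite ?ik.
  have Ek : iter k par y = iter (k - j + i) par y.
    by rewrite -(subnK kj) !iterD E subnK.
  have := IH (k - j + i); rewrite Ek.
  have lt: k - j + i < k.
    by lia.
  by case/(_ lt (leq_addl _ _)) => k' Hk' E'; exists k'.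
have [k' /andP[_ k'j] E'] := per n (leq_trans (ltnW lij) jn).
have := H1 k'.+1 (leq_trans k'j jn); rewrite upS (H1 k' (ltnW (leq_trans k'j jn))) /=.
by rewrite -E' H2.
Qed.

Lemma cspec_card y n : cspec y n -> n < #|T|.
Proof.
move=> C.
have inj : injective (fun k : 'I_n.+1 => iter k par y).
  move=> a b E; apply/val_inj/(cspec_inj C) => //; by rewrite -ltnS ltn_ord.
by have := leq_card _ inj; rewrite card_ord.
Qed.

Lemma fin_up_card y k : up k y = None -> up #|T| y = None.
Proof.
move=> /cspec_ex [n C]; exact: (cspec_up C (cspec_card C)).
Qed.

Lemma cspec_anc y n x : cspec y n -> anc p x y = [exists k : 'I_n, iter k.+1 par y == x].
Proof.
move=> C; have nT := cspec_card C; have [H1 H2] := C.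
apply/existsP/existsP.
  case=> k /andP[k0 /eqP E].
  have kn : k <= n.
    rewrite leqNgt; apply/negP=> nk.
    by move: E; rewrite -/(up k y) (cspec_up C nk).
  have kp := prednK k0.
  have kn' : k.-1 < n by rewrite -ltnS kp.
  have E' : iter k par y = x by move: E; rewrite -/(up k y) (H1 _ kn) => -[].
  exists (Ordinal kn'); apply/eqP; rewrite -E'.
  exact: (f_equal (fun j => iter j par y) kp).
case=> k /eqP E.
have kT : k.+1 < #|T|.+1 by rewrite ltnS; exact: leq_trans (ltn_ord k) (ltnW nT).
exists (Ordinal kT); apply/andP; split => //; apply/eqP.
by have := H1 _ (ltn_ord k); rewrite /up => ->; rewrite E.
Qed.

Lemma cspec_dep y n : cspec y n -> dep y = n.
Proof.
move=> C; rewrite /dep.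
have -> : [set x | anc p x y] = [set iter (val k).+1 par y | k : 'I_n].
  apply/setP=> x; rewrite inE (cspec_anc _ C).
  apply/existsP/imsetP.
    by case=> k /eqP <-; exists k.
  by case=> k _ ->; exists k.
rewrite card_imset ?card_ord // => a b E.
by apply/val_inj/eq_add_S/(cspec_inj C) => //; rewrite ?ltn_ord.
Qed.

End Chain.

End A1.
Import A1.
Module A2.

Section Chain2.
Variable T : finType.
Variable p : {ffun T -> option T}.
Hypothesis Hf : forall y : T, up p #|T| y = None.

Local Notation up := (up p).
Local Notation par := (par p).
Local Notation dep := (dep p).

Lemma dep_spec y : cspec p y (dep y).
Proof. by have [n C] := cspec_ex (Hf y); rewrite (cspec_dep C). Qed.

Lemma up_dep k y : k <= dep y -> up k y = Some (iter k par y).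
Proof. by have [H _] := dep_spec y; apply: H. Qed.

Lemma up_gt k y : dep y < k -> up k y = None.
Proof. by move=> h; exact: (cspec_up (dep_spec y) h). Qed.

Lemma p_dep y : p (iter (dep y) par y) = None.
Proof. by have [_ H] := dep_spec y. Qed.

Lemma iter_inj y i j : i <= dep y -> j <= dep y -> iter i par y = iter j par y -> i = j.
Proof. exact: cspec_inj (dep_spec y). Qed.

Lemma ancP x y : reflect (exists2 k, 0 < k <= dep y & iter k par y = x) (anc p x y).
Proof.
rewrite (cspec_anc x (dep_spec y)); apply: (iffP existsP).
  by case=> k /eqP <-; exists k.+1; rewrite ?ltn_ord.
case=> k /andP[k0 kd] <-; have kp := prednK k0.
have kd' : k.-1 < dep y by rewrite -ltnS kp.
exists (Ordinal kd'); apply/eqP.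
exact: (f_equal (fun j => iter j par y) kp).
Qed.

Lemma dep_up y n : up n y <> None -> up n.+1 y = None -> dep y = n.
Proof.
move=> H1 H2; case: (ltngtP (dep y) n) => // h.
  by rewrite up_gt in H1.
by rewrite up_dep in H2.
Qed.

Lemma up_iter n k y : k <= dep y -> up n (iter k par y) = up (n + k) y.
Proof.
move=> kd; rewrite /A1.up iterD -/(A1.up p k y) (up_dep kd) //.
Qed.

Lemma dep_iter y k : k <= dep y -> dep (iter k par y) = dep y - k.
Proof.
move=> kd; apply: dep_up; rewrite up_iter //.
  by rewrite subnK // up_dep.
by rewrite up_gt //; lia.
Qed.

Lemma par_p y : 0 < dep y -> p y = Some (par y).
Proof. by move=> h; have := up_dep h. Qed.

Lemma dep0 y : dep y = 0 -> p y = None.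
Proof. by move=> h; have := p_dep y; rewrite h. Qed.

Lemma iter_par_p y k : k < dep y -> p (iter k par y) = Some (iter k.+1 par y).
Proof.
move=> kd; rewrite par_p /=; last by rewrite dep_iter ?subn_gt0 // ltnW.
by [].
Qed.

Definition le_anc x y := (x == y) || anc p x y.

Lemma anc_dep x y : anc p x y -> dep x < dep y.
Proof.
case/ancP=> k /andP[k0 kd] <-; rewrite dep_iter //; lia.
Qed.

Lemma le_ancP x y : reflect (exists2 k, k <= dep y & iter k par y = x) (le_anc x y).
Proof.
apply: (iffP orP).
  case=> [/eqP ->|/ancP[k /andP[_ kd] E]]; [by exists 0 | by exists k].
case=> [[|k]] kd E; [left; rewrite -E // | right; apply/ancP; exists k.+1 => //].
Qed.

Lemma le_ancE x y : le_anc x y -> dep x <= dep y /\ x = iter (dep y - dep x) par y.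
Proof.
case/le_ancP=> k kd <-; rewrite dep_iter //; split; first exact: leq_subr.
by rewrite subKn.
Qed.

Lemma le_anc_iter y k : k <= dep y -> le_anc (iter k par y) y.
Proof. by move=> kd; apply/le_ancP; exists k. Qed.

Lemma le_anc_refl x : le_anc x x.
Proof. by rewrite /le_anc eqxx. Qed.

Lemma le_anc_trans x y z : le_anc x y -> le_anc y z -> le_anc x z.
Proof.
case/le_ancP=> k kd Ex; case/le_ancP=> j jd Ey; subst x y.
apply/le_ancP; exists (k + j); last by rewrite iterD.
by move: kd; rewrite dep_iter //; lia.
Qed.

Lemma le_anc_eq x y : le_anc x y -> dep x = dep y -> x = y.
Proof. by case/le_ancE=> _ E D; rewrite E D subnn. Qed.

Lemma le_anc_chain a b y : le_anc a y -> le_anc b y -> dep a <= dep b -> le_anc a b.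
Proof.
move=> /le_ancE[ay Ea] /le_ancE[by' Eb] ab.
apply/le_ancP; exists (dep b - dep a); first lia.
by rewrite [RHS]Ea [X in iter _ _ X]Eb -iterD; congr iter; lia.
Qed.

Lemma anc_le x y : anc p x y = le_anc x y && (x != y).
Proof.
rewrite /le_anc; case: (eqVneq x y) => [->|] /=; last by rewrite andbT.
by apply/negbTE/negP => /anc_dep; rewrite ltnn.
Qed.

End Chain2.

End A2.
Import A2.
Module A3.

Section Normal.
Variable T : finType.
Variable e : rel T.
Hypothesis esym : symmetric e.
Hypothesis eirr : irreflexive e.

Definition padj (p : {ffun T -> option T}) :=
  [forall x, forall z, (p x == Some z) ==> e z x].

Lemma forest_up (p : {ffun T -> option T}) : forest p -> forall y, up p #|T| y = None.
Proof. by move=> /forallP H y; apply/eqP; exact: H. Qed.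

Lemma up_forest (p : {ffun T -> option T}) : (forall y, up p #|T| y = None) -> forest p.
Proof. by move=> H; apply/forallP=> y; apply/eqP; exact: H. Qed.

Lemma padjP (p : {ffun T -> option T}) x z : padj p -> p x = Some z -> e z x.
Proof. by move=> /forallP/(_ x)/forallP/(_ z)/implyP H E; apply: H; rewrite E. Qed.

Definition Sdep (p : {ffun T -> option T}) := \sum_y fdepth p y.

Lemma sum_lt (F G : T -> nat) i0 :
  (forall i, F i <= G i) -> F i0 < G i0 -> \sum_i F i < \sum_i G i.
Proof.
move=> H H0; rewrite (bigD1 i0) //= [X in _ < X](bigD1 i0) //=.
by rewrite -addSn leq_add // leq_sum.
Qed.

Section Modif.
Variable pm : {ffun T -> option T}.
Hypothesis Hf : forall y, up pm #|T| y = None.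
Variables u v : T.
Hypothesis uv : u != v.
Hypothesis nuv : ~~ anc pm u v.
Hypothesis duv : dep pm u <= dep pm v.

Definition pm' : {ffun T -> option T} := [ffun x => if x == u then Some v else pm x].

Lemma clA z : ~~ le_anc pm u z -> forall k, up pm' k z = up pm k z.
Proof.
move=> nz; elim=> [|k IH] //; rewrite !upS IH.
case: (leqP k (dep pm z)) => kd.
  rewrite up_dep //= ffunE; case: eqP => // E.
  by move: nz; rewrite -E le_anc_iter.
by rewrite up_gt.
Qed.

Lemma nuv' : ~~ le_anc pm u v.
Proof. by rewrite /le_anc negb_or uv. Qed.

Lemma clB z : le_anc pm u z ->
  up pm' (dep pm z - dep pm u) z = Some u /\
  forall i, up pm' ((dep pm z - dep pm u).+1 + i) z = up pm i v.
Proof.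
move=> /(le_ancE Hf) [dz Eu].
set k := dep pm z - dep pm u.
have kd : k <= dep pm z by rewrite /k leq_subr.
have A : forall j, j <= k -> up pm' j z = Some (iter j (par pm) z).
  elim=> [|j IH] jk //.
  rewrite upS IH ?(ltnW jk) //= ffunE; case: eqP => E.
    have h : j = k by apply: (iter_inj Hf (y := z)); [lia | lia | rewrite E].
    by move: jk; rewrite h ltnn.
  have Hj1 : up pm j.+1 z = Some (iter j.+1 (par pm) z) by apply: (up_dep Hf); lia.
  by rewrite upS (up_dep Hf (k:=j)) /= in Hj1; last lia.
have Ak : up pm' k z = Some u by rewrite A // -Eu.
split=> // i.
have -> : up pm' (k.+1 + i) z = iter i (obind pm') (up pm' k.+1 z).
  by rewrite /up addnC iterD.
rewrite upS Ak /= ffunE eqxx -/(up pm' i v) clA //; exact: nuv'.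
Qed.

Lemma pm'_fin y : up pm' #|T| y = None.
Proof.
case: (boolP (le_anc pm u y)) => h.
  have [_ B] := clB h.
  apply: (fin_up_card (k := ((dep pm y - dep pm u).+1 + (dep pm v).+1))).
  by rewrite B up_gt.
by rewrite clA.
Qed.

Lemma pm'_dep y : dep pm y <= dep pm' y.
Proof.
case: (boolP (le_anc pm u y)) => h.
  have [_ B] := clB h.
  rewrite (dep_up pm'_fin (n := (dep pm y - dep pm u).+1 + dep pm v)).
  - have [dy _] := le_ancE Hf h; lia.
  - by rewrite B up_dep.
  by rewrite -addnS B up_gt.
apply: eq_leq; apply: eq_card => x; rewrite !inE /anc.
by apply: eq_existsb => k; rewrite -/(up pm k y) -/(up pm' k y) clA.
Qed.

Lemma pm'_dep_u : dep pm u < dep pm' u.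
Proof.
have h := le_anc_refl pm u.
have [_ B] := clB h.
rewrite (dep_up pm'_fin (n := (dep pm u - dep pm u).+1 + dep pm v)); first lia.
  by rewrite B up_dep.
by rewrite -addnS B up_gt.
Qed.

Lemma Sdep_lt : Sdep pm < Sdep pm'.
Proof.
apply: (sum_lt (i0 := u)) => [i|]; rewrite /fdepth -/(dep _ _) -/(dep _ _) ltnS.
  exact: pm'_dep.
exact: pm'_dep_u.
Qed.

Lemma pm'_padj : padj pm -> e u v -> padj pm'.
Proof.
move=> H euv; apply/forallP=> x; apply/forallP=> z; apply/implyP.
rewrite ffunE; case: (x =P u) => [->|_].
  by move=> /eqP [<-]; rewrite esym.
by move=> /eqP; apply: padjP.
Qed.

End Modif.

Lemma normal_exists : exists p, [&& forest p, padj p & in_closure e p].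
Proof.
pose p0 : {ffun T -> option T} := [ffun => None].
have P0 : forest p0 && padj p0.
  apply/andP; split.
    apply: up_forest => y.
    have T0 : 0 < #|T| by apply/card_gt0P; exists y.
    rewrite -(prednK T0); elim: #|T|.-1 => [|n IH]; first by rewrite /up /= ffunE.
    by rewrite upS IH.
  by apply/forallP=> x; apply/forallP=> z; rewrite ffunE.
have [pm /andP[fm am] Hmax] := @arg_maxnP _ p0 (fun q => forest q && padj q) Sdep P0.
exists pm; rewrite fm am /=.
have Hf := forest_up fm.
have key : forall u v, e u v -> ~~ anc pm u v -> ~~ anc pm v u -> dep pm u <= dep pm v -> False.
  move=> u v euv nuv nvu duv.
  have uv : u != v by apply/eqP=> E; move: euv; rewrite E eirr.
  have := Hmax (pm' pm u v); rewrite up_forest; last exact: (pm'_fin Hf uv nuv duv).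
  rewrite pm'_padj // => /(_ isT) H.
  have H' : Sdep (pm' pm u v) <= Sdep pm := H.
  by have := Sdep_lt Hf uv nuv duv; rewrite ltnNge H'.
apply/forallP=> u; apply/forallP=> v; apply/implyP=> euv.
apply/negPn/negP; rewrite negb_or => /andP[nuv nvu].
case: (leqP (dep pm u) (dep pm v)) => d.
  exact: (key u v).
by apply: (key v u) => //; [rewrite esym | exact: ltnW].
Qed.

End Normal.

End A3.
Import A3.
Module A4.

Ltac nat_only := repeat match goal with
 | H : ?P |- _ =>
   lazymatch type of P with
   | Prop =>
       lazymatch P with
       | is_true (_ <= _) => fail
       | @eq nat _ _ => fail
       | _ => clear H
       end
   end
 end.
Ltac slia := nat_only; lia.

Lemma last_iota_map (X : Type) (f : nat -> X) n : last (f 0) [seq f k | k <- iota 1 n] = f n.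
Proof.
elim: n f => [|n IH] f //=.
rewrite (iotaDl 1 1) -map_comp; exact: (IH (fun k => f k.+1)).
Qed.

Lemma path_rev_sym (X : Type) (e : rel X) : symmetric e ->
  forall x y s, path e x (rcons s y) -> path e y (rcons (rev s) x).
Proof.
move=> es x y s H; rewrite -rev_cons -(belast_rcons x s y) -{1}(last_rcons x s y) rev_path.
by rewrite (@eq_path _ _ e) // => a b; rewrite es.
Qed.

Section Process.
Variable T : finType.
Variable e : rel T.
Hypothesis esym : symmetric e.
Hypothesis eirr : irreflexive e.
Variable p : {ffun T -> option T}.
Hypothesis fp : forest p.
Hypothesis ap : padj e p.
Hypothesis cp : in_closure e p.

Let Hf := forest_up fp.
Local Notation par := (par p).
Local Notation dep := (dep p).
Local Notation le_anc := (le_anc p).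

Lemma e_par z : 0 < dep z -> e z (par z).
Proof. by move=> h; rewrite esym; apply: (padjP ap); exact: par_p. Qed.

Lemma chain_path z n : n <= dep z -> path e z [seq iter k par z | k <- iota 1 n].
Proof.
elim: n z => [|n IH] z nd //=.
rewrite e_par /=; last lia.
have := IH (par z); rewrite (dep_iter Hf (k := 1)) /=; last lia.
move=> /(_ ltac:(lia)).
by rewrite [iota 2 n](iotaDl 1 1 n) -map_comp; congr path; apply: eq_map => k /=; rewrite -iterSr.
Qed.

Lemma closure_anc u v : e u v -> anc p u v || anc p v u.
Proof. by move: cp => /forallP/(_ u)/forallP/(_ v)/implyP; apply. Qed.

Variable y : T.
Local Notation h := (dep y).
Definition x i := iter (h - i) par y.
Definition inS i v := le_anc (x i) v.

Lemma dep_x i : i <= h -> dep (x i) = i.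
Proof. by move=> ih; rewrite /x dep_iter ?leq_subr // subKn. Qed.

Lemma x_le i j : i <= h -> j <= h -> le_anc (x i) (x j) = (i <= j).
Proof.
move=> ih jh; apply/idP/idP.
  by case/(le_ancE Hf); rewrite !dep_x.
move=> ij; apply: (le_anc_chain Hf (y := y)); rewrite ?dep_x //; exact: le_anc_iter (leq_subr _ _).
Qed.

Lemma x_inj i j : i <= h -> j <= h -> x i = x j -> i = j.
Proof. by move=> ih jh E; rewrite -(dep_x ih) -(dep_x jh) E. Qed.

Lemma x_edge i : i < h -> e (x i) (x i.+1).
Proof.
move=> ih; apply: (padjP ap).
have H : h - i.+1 < dep y by lia.
rewrite /x (iter_par_p Hf H).
by have -> : (h - i.+1).+1 = h - i by lia.
Qed.

Lemma inS_x i j : i <= h -> j <= h -> inS i (x j) = (i <= j).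
Proof. exact: x_le. Qed.

Lemma inS_mono i j v : i <= j -> j <= h -> inS j v -> inS i v.
Proof.
move=> ij jh; apply: le_anc_trans; first exact: Hf.
by rewrite x_le //; lia.
Qed.

Lemma anc_x u i : i <= h -> le_anc u (x i) -> u = x (dep u) /\ dep u <= i.
Proof.
move=> ih /(le_ancE Hf)[du Eu]; rewrite dep_x // in du Eu *; split=> //.
by rewrite {1}Eu /x -iterD; congr iter; lia.
Qed.

Lemma F1 i u v : i <= h -> inS i v -> e u v -> ~~ inS i u -> exists2 j, j < i & u = x j.
Proof.
move=> ih iv euv niu.
have := closure_anc euv; rewrite !(anc_le Hf) => /orP[/andP[uv _]|/andP[vu _]]; last first.
  by move: niu; rewrite /inS (le_anc_trans Hf iv vu).
case: (leqP i (dep u)) => d.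
  have : le_anc (x i) u by apply: (le_anc_chain Hf (y := v)) => //; rewrite dep_x.
  by rewrite /inS in niu; move=> h'; rewrite h' in niu.
have : le_anc u (x i) by apply: (le_anc_chain Hf (y := v)) => //; rewrite dep_x // ltnW.
by case/anc_x => // E _; exists (dep u).
Qed.

Lemma connect_exit (r : rel T) (A : pred T) s t :
  connect r s t -> A s -> ~~ A t -> exists v u, [/\ A v, ~~ A u & r v u].
Proof.
case/connectP=> q pq -> {t}; elim: q s pq => [|z q IH] s /=; first by move=> _ ->.
case/andP=> rsz pq As; case: (boolP (A z)) => Az.
  exact: IH.
by move=> _; exists s, z.
Qed.

Hypothesis conn : forall v a b : T, a != v -> b != v -> connect (del_vertex e v) a b.

Lemma F2 a : 0 < a -> a < h -> exists v j, [/\ inS a.+1 v, j < a & e v (x j)].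
Proof.
move=> a0 ah.
have := conn (v := x a) (a := x a.+1) (b := x 0).
have ne1 : x a.+1 != x a by apply/eqP=> /x_inj; lia.
have ne0 : x 0 != x a by apply/eqP=> /x_inj; lia.
move=> /(_ ne1 ne0) Hc.
have := connect_exit (A := inS a.+1) Hc.
rewrite /inS le_anc_refl x_le // => /(_ isT isT) [v [u [Sv nSu /and3P[evu _ nu]]]].
have [j jl Ej] := F1 ah Sv (etrans (esym u v) evu) nSu.
exists v, j; split=> //; last by rewrite -Ej.
rewrite ltn_neqAle -ltnS jl andbT; apply/eqP => E; move: nu; by rewrite Ej E eqxx.
Qed.


Definition Pseq a n := [seq x i | i <- iota a n].

Lemma path_x a n : a + n <= h -> path e (x a) (Pseq a.+1 n).
Proof.
elim: n a => [|n IH] a an //=.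
rewrite x_edge; last lia.
by apply: IH; lia.
Qed.

Lemma last_Pseq a n : last (x a) (Pseq a.+1 n) = x (a + n).
Proof.
elim: n a => [|n IH] a /=; first by rewrite addn0.
by rewrite IH addSnnS.
Qed.

Lemma mem_Pseq z a n : (z \in Pseq a n) = has (fun i => z == x i) (iota a n).
Proof.
apply/mapP/hasP.
  by case=> i ii ->; exists i.
by case=> i ii /eqP ->; exists i.
Qed.

Lemma uniq_Pseq a n : a + n <= h.+1 -> uniq (Pseq a n).
Proof.
move=> an; rewrite map_inj_in_uniq ?iota_uniq // => i j.
rewrite !mem_iota => /andP[_ ih] /andP[_ jh]; apply: x_inj; lia.
Qed.

Lemma b_cases b : b <= h -> b < h \/ b = h.
Proof. lia. Qed.

Definition valid a b (R : seq T) := [/\ a < b, b <= h, uniq R, path e (x b) (rcons R (x a)) &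
   [/\ (b < h -> all (inS b.+1) R), (b = h -> R = [::]) &
   (b < h -> forall v j, inS b.+1 v -> j < a -> ~~ e v (x j))]].

Lemma notin_R a b R i : valid a b R -> i <= b -> x i \notin R.
Proof.
case=> ab bh _ _ [sR eR _] ib; case: (b_cases bh) => [bh'|E]; last by rewrite eR.
apply/negP=> /(allP (sR bh')); rewrite inS_x //; lia.
Qed.

Variable L : nat.
Hypothesis Hcyc : forall s n, is_cycle_of_length e s n -> n <= L.

Lemma valid_cycle a b R : valid a b R -> 0 < size R -> (b - a).+1 + size R <= L.
Proof.
move=> V sR0; have [ab bh uR pR _] := V.
apply: (Hcyc (s := x a :: (Pseq a.+1 (b - a) ++ R))); split.
- rewrite cons_uniq mem_cat negb_or mem_Pseq (notin_R V (ltnW ab)) andbT.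
  rewrite cat_uniq uR uniq_Pseq /=; last lia.
  rewrite andbT; apply/andP; split.
    apply/hasP=> -[i]; rewrite mem_iota => /andP[ai ib] /eqP E.
    have : a = i by apply: x_inj => //; lia.
    lia.
  apply/hasP=> -[z zR]; rewrite /= mem_Pseq => /hasP[i]; rewrite mem_iota => /andP[_ ib] /eqP E.
  by move: zR; rewrite E (negbTE (notin_R V _)) //; lia.
- by rewrite /= size_cat size_map size_iota; lia.
- lia.
rewrite /cycle rcons_cat cat_path path_x; last lia.
by rewrite last_Pseq subnKC // ltnW.
Qed.

Lemma step a b R : valid a b R -> 0 < a ->
  exists a' R', [/\ valid a' a R', a' < a & size R < size R'].
Proof.
move=> V a0; have [ab bh uR pR [sR eR iR]] := V.
have ah : a < h by slia.
have [v0 [j0 [Sv0 j0a ev0]]] := F2 a0 ah.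
pose P j := [exists v, inS a.+1 v && e v (x j)].
have exP : exists j, P j by exists j0; apply/existsP; exists v0; rewrite Sv0 ev0.
case: (ex_minnP exP) => a' /existsP[w /andP[Sw ew]] amin.
have a'a : a' < a.
  have : a' <= j0 by apply: amin; apply/existsP; exists v0; rewrite Sv0 ev0.
  slia.
have I3 : forall v j, inS a.+1 v -> j < a' -> ~~ e v (x j).
  move=> v j Sv ja; apply/negP=> evj.
  have : a' <= j by apply: amin; apply/existsP; exists v; rewrite Sv evj.
  slia.
pose Q i := (i <= h) && inS i w.
have exQ : exists i, Q i by exists a.+1; rewrite /Q Sw andbT.
have bndQ : forall i, Q i -> i <= h by move=> i /andP[].
case: (ex_maxnP exQ bndQ) => m /andP[mh Sm] mmax.
have am : a < m by apply: mmax; rewrite /Q Sw andbT.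
have mb : m <= b.
  case: (b_cases bh) => [bh'|->]; last by [].
  rewrite leqNgt; apply/negP=> bm.
  have Sbw : inS b.+1 w by apply: (inS_mono bm mh Sm).
  by have := iR bh' w a' Sbw a'a; rewrite ew.
have [dm Exm] := le_ancE Hf Sm; rewrite dep_x // in dm Exm.
set K := dep w - m in Exm.
have Kd : K <= dep w by rewrite /K leq_subr.
pose B := [seq iter k par w | k <- iota 0 K.+1].
pose PP := Pseq m.+1 (b - m).
have memB : forall z, z \in B -> le_anc z w /\ inS m z.
  move=> z /mapP[k]; rewrite mem_iota => /andP[_ kK] ->; split.
    by apply: (le_anc_iter Hf); slia.
  rewrite /inS Exm; have -> : K = (K - k) + k by slia.
  rewrite iterD; apply: (le_anc_iter Hf); rewrite (dep_iter Hf); slia.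
exists a', (rev (B ++ PP ++ R)); split=> //; last first.
  by rewrite size_rev !size_cat size_map size_iota; slia.
split=> //.
- exact: ltnW.
- rewrite rev_uniq cat_uniq; apply/and3P; split.
  + rewrite map_inj_in_uniq ?iota_uniq // => i j.
    rewrite !mem_iota => /andP[_ ih] /andP[_ jh]; apply: (iter_inj Hf); slia.
  + apply/hasP=> -[z]; rewrite mem_cat => /orP[zP|zR] /memB[zw _].
      move: zP; rewrite mem_Pseq => /hasP[i]; rewrite mem_iota => /andP[mi ib] /eqP E.
      have : i <= m by apply: mmax; rewrite /Q /inS -E zw andbT; slia.
      slia.
    case: (b_cases bh) => [bh'|E]; last by move: zR; rewrite eR.
    have Sz := allP (sR bh') z zR.
    have : b.+1 <= m by apply: mmax; rewrite /Q /inS (le_anc_trans Hf Sz zw) andbT.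
    slia.
  + rewrite cat_uniq uR uniq_Pseq /=; last slia.
    rewrite andbT; apply/hasP=> -[z zR]; rewrite mem_Pseq => /hasP[i]; rewrite mem_iota.
    move=> /andP[_ ib] /eqP E; move: zR; rewrite E (negbTE (notin_R V _)) //; slia.
- apply: (@path_rev_sym T e esym (x a') (x a) (B ++ PP ++ R)); rewrite !rcons_cat.
  rewrite /B /= (esym _ w) ew /= cat_path chain_path //=.
  rewrite -[w]/(iter 0 par w) last_iota_map -Exm cat_path path_x; last slia.
  by rewrite last_Pseq subnKC.
split.
- move=> _; apply/allP=> z; rewrite mem_rev !mem_cat => /or3P[/memB[_ Sz]|zP|zR].
  + by apply: (inS_mono _ mh Sz).
  + move: zP; rewrite mem_Pseq => /hasP[i]; rewrite mem_iota => /andP[mi ib] /eqP ->.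
    rewrite inS_x; slia.
  + case: (b_cases bh) => [bh'|E]; last by move: zR; rewrite eR.
    by apply: (inS_mono (j := b.+1)) => //; [slia | exact: (allP (sR bh'))].
- by move=> E; move: ah; rewrite E ltnn.
- by move=> _; exact: I3.
Qed.

Lemma proc a : forall b R, valid a b R -> a <= 'C(L.-1 - size R, 2).
Proof.
elim/ltn_ind: a => a IH b R V.
case: (posnP a) => [->|a0] //.
have [a' [R' [V' aa' sRR']]] := step V a0.
have cyc := valid_cycle V' (leq_ltn_trans (leq0n _) sRR').
have IH' := IH a' aa' a R' V'.
set n := L.-1 - size R'.
have an : a - a' <= n by rewrite /n; slia.
have nR : n.+1 <= L.-1 - size R by rewrite /n; slia.
apply: (leq_trans _ (leq_bin2l 2 nR)); rewrite binS bin1.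
move: IH'; rewrite -/n => IH'; slia.
Qed.

Lemma dep_bound : dep y <= 'C(L.-1, 2) + 1.
Proof.
case: (posnP h) => [->|h0]; first by rewrite addn1.
have V : valid h.-1 h [::].
  split=> //; first by rewrite prednK.
  - have E : e (x h.-1) (x h.-1.+1) by apply: x_edge; rewrite prednK.
    by rewrite prednK // in E; rewrite /= esym E.
  - by split=> //; rewrite ltnn.
have := proc V; rewrite subn0; lia.
Qed.

End Process.

End A4.
Import A4.
Module A5.

Section Lower.
Variable T : finType.
Variable e : rel T.
Hypothesis esym : symmetric e.
Variable p : {ffun T -> option T}.
Hypothesis fp : forest p.
Hypothesis cp : in_closure e p.

Let Hf := forest_up fp.
Local Notation dep := (dep p).
Local Notation le_anc := (le_anc p).

Definition gpath (S : seq T) := if S is x0 :: Q then path e x0 Q else true.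

Lemma gpath_cat S1 r S2 : gpath (S1 ++ r :: S2) -> gpath S1 /\ gpath S2.
Proof.
have H2 : path e r S2 -> gpath S2 by case: S2 => //= z S2 /andP[].
case: S1 => [|x0 S1] /=; first by move/H2.
by rewrite cat_path /= => /and3P[-> _ /H2].
Qed.

Lemma seq_min (s : seq T) (f : T -> nat) x0 :
  exists2 r, r \in x0 :: s & forall z, z \in x0 :: s -> f r <= f z.
Proof.
elim: s x0 => [|a s IH] x0.
  by exists x0 => [|z]; rewrite ?inE // => /eqP ->.
have [r' r'in r'min] := IH a.
case: (leqP (f x0) (f r')) => h.
  exists x0; first by rewrite inE eqxx.
  move=> z; rewrite inE => /orP[/eqP ->//|/r'min]; exact: leq_trans.
exists r'; first by rewrite inE r'in orbT.
move=> z; rewrite inE => /orP[/eqP ->|/r'min //]; exact: ltnW.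
Qed.

Lemma L_step r u v : le_anc r u -> e u v -> dep r <= dep v -> le_anc r v.
Proof.
move=> ru euv rv.
have := closure_anc cp euv; rewrite !(anc_le Hf) => /orP[/andP[uv _]|/andP[vu _]].
  exact: le_anc_trans ru uv.
apply: (le_anc_chain Hf (y := u)) => //.
Qed.

Lemma prop_right r c l : le_anc r c -> path e c l -> (forall z, z \in l -> dep r <= dep z) ->
  forall z, z \in l -> le_anc r z.
Proof.
elim: l c => [|a l IH] c // rc /= /andP[eca pl] H z.
have ra : le_anc r a by apply: L_step rc eca _; apply: H; rewrite inE eqxx.
rewrite inE => /orP[/eqP -> //|zl].
by apply: (IH a) => // w wl; apply: H; rewrite inE wl orbT.
Qed.

Lemma prop_all r S : r \in S -> gpath S -> (forall z, z \in S -> dep r <= dep z) ->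
  forall z, z \in S -> le_anc r z.
Proof.
elim: S => [|x0 Q IH] //= rS pS H.
case: (boolP (le_anc r x0)) => h.
  move=> z; rewrite inE => /orP[/eqP -> //|]; apply: (prop_right h pS).
  by move=> w wQ; apply: H; rewrite inE wQ orbT.
have rQ : r \in Q by move: rS; rewrite inE => /orP[/eqP E|//]; move: h; rewrite E le_anc_refl.
clear rS; case: Q IH pS rQ H => [|a Q] IH pS rQ H //.
case/andP: pS => ea pQ.
have HQ : forall z, z \in a :: Q -> le_anc r z.
  by apply: IH => // z zQ; apply: H; rewrite inE zQ orbT.
have rx0 : le_anc r x0.
  apply: (L_step (HQ a (mem_head _ _))); first by rewrite esym.
  by apply: H; rewrite mem_head.
by move: h; rewrite rx0.
Qed.

Lemma count_card (S : seq T) z : uniq S -> count (fun u => anc p u z) S <= dep z.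
Proof.
move=> uS; rewrite -size_filter /dep.
have uF : uniq (filter (fun u => anc p u z) S) by rewrite filter_uniq.
rewrite -(card_uniqP uF); apply: subset_leq_card; apply/subsetP=> u.
by rewrite mem_filter inE => /andP[].
Qed.

Lemma lb_gen n : forall S, size S = n.+1 -> uniq S -> gpath S ->
  exists2 z, z \in S & up_log 2 n.+2 <= (count (fun u => anc p u z) S).+1.
Proof.
elim/ltn_ind: n => n IH S sS uS pS.
have [r rS rmin] : exists2 r, r \in S & forall z, z \in S -> dep r <= dep z.
  by case: S sS {uS pS} => // x0 Q _; exact: seq_min.
have rall := prop_all rS pS rmin.
case/splitPr: rS sS uS pS rall {rmin} => S1 S2 sS uS pS rall.
have [p1 p2] := gpath_cat pS.
move: (uS); rewrite cat_uniq /= => /and3P[u1 hS1 /andP[nr2 u2]].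
have nr1 : r \notin S1 by move: hS1; rewrite negb_or => /andP[].
have cnt : forall z, z \in S1 ++ S2 -> count (fun u => anc p u z) (S1 ++ r :: S2) =
   (count (fun u => anc p u z) S1 + count (fun u => anc p u z) S2).+1.
  move=> z zS; rewrite count_cat /= (anc_le Hf) rall; last first.
    by move: zS; rewrite !mem_cat inE => /orP[->|->]; rewrite ?orbT.
  have -> : r != z.
    by apply/eqP=> E; move: zS; rewrite -E mem_cat (negbTE nr1) (negbTE nr2).
  by rewrite addnS.
rewrite size_cat /= addnS in sS; case: sS => sS.
have key : forall P', (P' = S1 \/ P' = S2) -> n <= (size P').*2 ->
    exists2 z, z \in S1 ++ r :: S2 & up_log 2 n.+2 <= (count (fun u => anc p u z) (S1 ++ r :: S2)).+1.
  move=> P' HP sP.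
  case: (posnP n) => [n0|n0].
    exists r; first by rewrite mem_cat inE eqxx orbT.
    by rewrite n0 up_lognn.
  case EP: P' sP HP => [|z0 P''] sP HP; first by move: sP n0; rewrite /=; slia.
  have kn : size P'' < n.
    case: HP => E; move: sS; rewrite -E /= ; slia.
  have uP : uniq (z0 :: P'') by case: HP => ->.
  have gP : gpath (z0 :: P'') by case: HP => ->.
  have [z zP Hz] := IH _ kn (z0 :: P'') erefl uP gP.
  have zS : z \in S1 ++ S2 by case: HP => E; rewrite mem_cat -E zP ?orbT.
  exists z; first by move: zS; rewrite !mem_cat inE => /orP[->|->]; rewrite ?orbT.
  rewrite (cnt z zS).
  have c1 : count (fun u => anc p u z) (z0 :: P'') <= count (fun u => anc p u z) S1 + count (fun u => anc p u z) S2.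
    by case: HP => ->; [exact: leq_addr | exact: leq_addl].
  have h1 : up_log 2 n.+2 <= (up_log 2 (size P'').+2).+1.
    rewrite -up_log2_double //; apply: leq_up_log; move: sP; rewrite /=; slia.
  move: h1 Hz c1.
  slia.
case: (leqP (size S2) (size S1)) => h.
  by apply: (key S1 (or_introl erefl)); rewrite -addnn -sS leq_add2l.
by apply: (key S2 (or_intror erefl)); rewrite -addnn -sS leq_add2r ltnW.
Qed.

End Lower.

End A5.
Import A5.

Lemma lb_cycle (T : finType) (e : rel T) (esym : symmetric e) (p : {ffun T -> option T})
  (fp : forest p) (cp : in_closure e p) L s :
  is_cycle_of_length e s L -> exists z, (up_log 2 L).+1 <= fdepth p z.
Proof.
case=> us sL L3 cs.
have [r rs rmin] : exists2 r, r \in s & forall z, z \in s -> dep p r <= dep p z.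
  by case: s us sL L3 cs => [|x0 Q] _ sL L3 _; [move: L3; rewrite -sL | exact: seq_min].
case/rot_to: rs => i Q E.
have c' : cycle e (r :: Q) by rewrite -E rot_cycle.
have u' : uniq (r :: Q) by rewrite -E rot_uniq.
have sz : (size Q).+1 = L by rewrite -sL -(size_rot i s) E.
have g : gpath e (r :: Q) by move: c'; rewrite /= rcons_path => /andP[].
have rmin' : forall z, z \in r :: Q -> dep p r <= dep p z by move=> z; rewrite -E mem_rot; exact: rmin.
have rall := prop_all esym fp cp (mem_head r Q) g rmin'.
have gQ : gpath e Q by move: g; case: (Q) => //= a Q' /andP[].
have szQ : size Q = (L - 2).+1 by rewrite -sz; move: L3; rewrite -sz; case: (size Q) => [|[|k]].
have uQ : uniq Q by move: u'; rewrite cons_uniq => /andP[].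
have [z zQ Hz] := lb_gen esym fp cp szQ uQ gQ.
have rz : anc p r z.
  rewrite (anc_le (forest_up fp)) rall ?inE ?zQ ?orbT //=.
  by apply/eqP=> E'; move: u'; rewrite cons_uniq E' zQ.
exists z; rewrite /fdepth -/(dep p z) ltnS.
have := count_card p z u'; rewrite /= rz add1n.
have E2 : (L - 2).+2 = L by move: L3; rewrite -sz; case: (size Q) => [|[|k]].
rewrite E2 in Hz; move=> H2; exact: leq_trans Hz H2.
Qed.

Lemma bigmin_le_seq (I : eqType) (r : seq I) (P : pred I) (F : I -> nat) idx i0 :
  i0 \in r -> P i0 -> \big[minn/idx]_(i <- r | P i) F i <= F i0.
Proof.
elim: r => // a r IH; rewrite inE big_cons => /orP[/eqP <- -> | ir Pi]; first exact: geq_minl.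
case: ifP => _; last exact: IH.
exact: leq_trans (geq_minr _ _) (IH ir Pi).
Qed.

Theorem mainTheorem2 (T : finType) (e : rel T) (L : nat) :
  simple_graph e -> two_connected e -> max_cycle_length e L ->
  1 + up_log 2 L <= td e <= 'C(L.-1, 2) + 2.
Proof.
case=> esym eirr [_ _ conn] [[s0 Hs0] Hcyc].
apply/andP; split.
  rewrite /td; apply: (big_ind (fun m => 1 + up_log 2 L <= m)).
  - have [us sL L3 _] := Hs0.
    have LT : L <= #|T| by rewrite -sL -(card_uniqP us) max_card.
    apply: leq_trans LT; rewrite add1n.
    have : up_log 2 L <= L.-1.
      apply: up_log_min => //; have := ltn_expl L.-1 (isT : 1 < 2).
      by rewrite -(prednK (leq_trans _ L3)).
    by rewrite -ltnS => /leq_trans; apply; rewrite prednK // (leq_trans _ L3).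
  - by move=> a b ha hb; rewrite leq_min ha hb.
  move=> q /andP[fq cq].
  have [z Hz] := lb_cycle esym fq cq Hs0.
  by rewrite add1n; apply: leq_trans Hz (leq_bigmax z).
have [p /and3P[fp ap cp]] := normal_exists esym eirr.
have Pp : forest p && in_closure e p by rewrite fp cp.
have H := @bigmin_le_seq _ (index_enum {ffun T -> option T}) (fun q => forest q && in_closure e q)
   (@fheight T) #|T| p (mem_index_enum p) Pp.
rewrite /td; apply: leq_trans H _.
apply/bigmax_leqP => z _.
have := dep_bound esym fp ap cp z conn Hcyc.
by rewrite /fdepth -/(dep p z) addn1 addn2 ltnS.
Qed.
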